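(* Let $T$ be a parity decision tree on $\{-1,1\}^n$ of depth $d$. Then there is a refinement $T'$ of $T$ which is a correlation-free parity decision tree of depth at most $2d$.
   Context: A parity decision tree on $\{-1,1\}^n$ is a rooted full binary tree whose internal nodes are labelled by subsets $S\subseteq[n]$, whose two outgoing edges are labelled $-1$ and $1$; an input $x$ follows from a node labelled $S$ the edge labelled $\prod_{i\in S}x_i$. Depth is the maximum number of internal nodes on a root-to-leaf path. A refinement of $T$ is a parity decision tree obtained from $T$ by replacing leaves with (parity decision) subtrees. A quantity (such as $x_i$ or $x_i\oplus x_j$) is fixed by the queries on a path if it is determined by the answers to the parities queried along that path. A tree is (pairwise) correlation-free (also called uncorrelated) if for every $i\ne j\in[n]$ and every path in it, whenever $x_i\oplus x_j$ is fixed by the queries in the path, so are $x_i$ and $x_j$. *)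

(* Defs.v *)
From mathcomp Require Import all_boot all_order all_algebra.
Set Implicit Arguments. Unset Strict Implicit. Unset Printing Implicit Defensive.
Import GRing.Theory Num.Theory.
Local Open Scope ring_scope.

(* Leaves carry no label (only the tree
   shape and queries matter for refinements / correlation-freeness).
   [PNode S tm tp]: query the parity prod_{i in S} x_i; follow [tm] on
   answer -1 and [tp] on answer 1. *)
Inductive pdt (n : nat) : Type :=
| PLeaf
| PNode of {set 'I_n} & pdt n & pdt n.

Arguments PLeaf {n}.

Fixpoint depth n (t : pdt n) : nat :=
  match t with
  | PLeaf => 0
  | PNode _ tm tp => (maxn (depth tm) (depth tp)).+1
  end.

Fixpoint refines n (t' t : pdt n) : Prop :=
  match t with
  | PLeaf => True
  | PNode Q tm tp =>
      match t' with
      | PLeaf => False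
      | PNode Q' tm' tp' => Q' = Q /\ refines tm' tm /\ refines tp' tp
      end
  end.

Fixpoint leaf_paths n (t : pdt n) : seq (seq ({set 'I_n} * int)) :=
  match t with
  | PLeaf => [:: [::]]
  | PNode Q tm tp =>
      map (cons (Q, -1)) (leaf_paths tm) ++ map (cons (Q, 1)) (leaf_paths tp)
  end.

Definition is_input n (x : 'I_n -> int) : Prop :=
  forall i, x i = 1 \/ x i = -1.

Definition parity n (S : {set 'I_n}) (x : 'I_n -> int) : int :=
  \prod_(i in S) x i.

Definition follows n (x : 'I_n -> int) (p : seq ({set 'I_n} * int)) : Prop :=
  forall q, q \in p -> parity q.1 x = q.2.

Definition fixed_by n (p : seq ({set 'I_n} * int)) (f : ('I_n -> int) -> int)
  : Prop :=
  forall x y, is_input x -> is_input y -> follows x p -> follows y p ->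
    f x = f y.

(* x_i (+) x_j corresponds, in the {-1,1} encoding, to x_i * x_j *)
Definition correlation_free n (t : pdt n) : Prop :=
  forall (i j : 'I_n), i != j -> forall p, p \in leaf_paths t ->
    fixed_by p (fun x => x i * x j) ->
    fixed_by p (fun x => x i) /\ fixed_by p (fun x => x j).

(* Main.v *)
Require Import Defs.
From mathcomp Require Import all_boot all_order all_algebra.
From mathcomp Require Import zify.
From Stdlib Require Import Classical FunctionalExtensionality.
Set Implicit Arguments. Unset Strict Implicit. Unset Printing Implicit Defensive.
Import GRing.Theory Num.Theory.

Local Open Scope ring_scope.

Definition sgn (b : bool) : int := if b then -1 else 1.
Definition toint n (b : {ffun 'I_n -> bool}) : 'I_n -> int := fun i => sgn (b i).
Definition bxor n (b c : {ffun 'I_n -> bool}) : {ffun 'I_n -> bool} :=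
  [ffun i => b i (+) c i].
Definition Cset n (p : seq ({set 'I_n} * int)) : {set {ffun 'I_n -> bool}} :=
  [set b | all (fun q => parity q.1 (toint b) == q.2) p].
Definition Afix n (p : seq ({set 'I_n} * int)) : {set 'I_n} :=
  [set i | [forall (b | b \in Cset p), [forall (c | c \in Cset p), b i == c i]]].

Lemma sgn_mul a b : sgn a * sgn b = sgn (a (+) b).
Proof. by case: a; case: b; rewrite /= ?mulr1 ?mul1r ?mulrNN ?mulr1. Qed.

Lemma sgn_inj a b : sgn a = sgn b -> a = b.
Proof. by case: a; case: b. Qed.

Lemma toint_input n (b : {ffun 'I_n -> bool}) : is_input (toint b).
Proof. by move=> i; rewrite /toint; case: (b i); [right|left]. Qed.

Lemma toint_ofint n (x : 'I_n -> int) : is_input x ->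
  x = toint [ffun i => x i == -1].
Proof.
move=> hx; apply: functional_extensionality => i; rewrite /toint ffunE.
by case: (hx i) => ->.
Qed.

Lemma parity_xor n S (b c : {ffun 'I_n -> bool}) :
  parity S (toint (bxor b c)) = parity S (toint b) * parity S (toint c).
Proof.
rewrite /parity -big_split; apply: eq_bigr => i _.
by rewrite /toint ffunE; exact: (esym (sgn_mul _ _)).
Qed.

Lemma parity_sq n S (b : {ffun 'I_n -> bool}) :
  parity S (toint b) * parity S (toint b) = 1.
Proof.
rewrite /parity -big_split; apply: big1 => i _.
by rewrite /toint /= (sgn_mul (b i) (b i)) addbb.
Qed.

Lemma parity_pm n S (b : {ffun 'I_n -> bool}) :
  parity S (toint b) = 1 \/ parity S (toint b) = -1.
Proof.
have := parity_sq S b; set v := parity S _ => h.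
have : v ^+ 2 == 1 by rewrite expr2 h.
by rewrite sqrf_eq1 => /orP [/eqP|/eqP]; [left|right].
Qed.

Lemma follows_toint n (b : {ffun 'I_n -> bool}) p :
  follows (toint b) p <-> b \in Cset p.
Proof.
rewrite inE; split => [h|/allP h q hq].
  by apply/allP => q hq; apply/eqP; exact: h.
exact/eqP/h.
Qed.

Lemma fixedE n (p : seq ({set 'I_n} * int)) f :
  fixed_by p f <-> (forall b c, b \in Cset p -> c \in Cset p ->
                     f (toint b) = f (toint c)).
Proof.
split.
  move=> h b c hb hc; apply: h; try exact: toint_input; exact/follows_toint.
move=> h x y hx hy fx fy; rewrite (toint_ofint hx) (toint_ofint hy).
apply: h; apply/follows_toint; by rewrite -?toint_ofint.
Qed.

Lemma AfixP n (p : seq ({set 'I_n} * int)) i :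
  i \in Afix p <-> fixed_by p (fun x => x i).
Proof.
rewrite inE fixedE; split.
  move/forall_inP => h b c hb hc.
  by rewrite /toint; move: (h b hb) => /forall_inP/(_ c hc)/eqP ->.
move=> h; apply/forall_inP => b hb; apply/forall_inP => c hc.
by apply/eqP/sgn_inj/h.
Qed.

Lemma pairE n (p : seq ({set 'I_n} * int)) i j :
  fixed_by p (fun x => x i * x j) <->
  (forall b c, b \in Cset p -> c \in Cset p -> b i (+) b j = c i (+) c j).
Proof.
rewrite fixedE; split => h b c hb hc.
  by apply/sgn_inj; rewrite -!sgn_mul; apply: h.
by rewrite /toint !sgn_mul (h b c hb hc).
Qed.

Lemma Cset_cat1 n (p : seq ({set 'I_n} * int)) q :
  Cset (p ++ [:: q]) = Cset p :&: [set b | parity q.1 (toint b) == q.2].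
Proof. by apply/setP => b; rewrite !inE all_cat /= andbT andbC. Qed.

Lemma Cset_xor3 n (p : seq ({set 'I_n} * int)) b c e :
  b \in Cset p -> c \in Cset p -> e \in Cset p -> bxor (bxor b c) e \in Cset p.
Proof.
rewrite !inE => /allP hb /allP hc /allP he; apply/allP => q hq.
rewrite !parity_xor (eqP (hb q hq)) (eqP (hc q hq)) (eqP (he q hq)).
have := parity_sq q.1 b; rewrite (eqP (hb q hq)) => ->; by rewrite mul1r.
Qed.

Lemma bxor_inj n (y z : {ffun 'I_n -> bool}) :
  injective (fun x => bxor (bxor x y) z).
Proof.
move=> x1 x2 /= h; apply/ffunP => i; move/ffunP/(_ i): h; rewrite !ffunE.
by move/addIb/addIb.
Qed.

Lemma halve n (p : seq ({set 'I_n} * int)) q :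
  Cset (p ++ [:: q]) != set0 -> (#|Cset p| <= 2 * #|Cset (p ++ [:: q])|)%N.
Proof.
rewrite Cset_cat1; set D := [set b | _]; set C := Cset p.
case/set0Pn => y; rewrite inE => /andP [yC yD].
rewrite -(cardsID D C).
suff : (#|C :\: D| <= #|C :&: D|)%N by move=> h; rewrite mul2n -addnn leq_add2l.
case: (set_0Vmem (C :\: D)) => [->|[z]]; first by rewrite cards0.
rewrite inE => /andP [zD zC].
rewrite -(card_imset _ (@bxor_inj _ y z)); apply: subset_leq_card.
apply/subsetP => _ /imsetP [x xin ->]; move: xin; rewrite inE => /andP [xD xC].
rewrite inE Cset_xor3 //= /D.
move: xD zD yD; rewrite !inE !parity_xor => xD zD /eqP yq.
have -> : parity q.1 (toint x) = parity q.1 (toint z).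
  move: xD zD; rewrite -yq.
  case: (parity_pm q.1 x) => ->; case: (parity_pm q.1 y) => ->;
    case: (parity_pm q.1 z) => -> //.
by rewrite mulrAC parity_sq mul1r yq.
Qed.

Lemma card_bound n (C : {set {ffun 'I_n -> bool}}) (B : {set 'I_n}) :
  (forall b c, b \in C -> c \in C -> (forall k, k \in B -> b k = c k) -> b = c) ->
  (#|C| <= 2 ^ #|B|)%N.
Proof.
move=> hinj.
pose r (b : {ffun 'I_n -> bool}) : {ffun 'I_n -> bool} := [ffun k => (k \in B) && b k].
have rinj : {in C &, injective r}.
  move=> b c hb hc /ffunP e; apply: hinj => // k kB.
  by move: (e k); rewrite !ffunE kB.
rewrite -(card_in_imset rinj).
have -> : (2 ^ #|B|)%N = #|pffun_on false B (@predT bool)|.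
  by rewrite card_pffun_on; congr (_ ^ _)%N; rewrite cardT enumT /= unlock.
apply: subset_leq_card; apply/subsetP => _ /imsetP [b _ ->].
apply/pffun_onP; split => //.
apply/supportP => k kB; by rewrite ffunE (negbTE kB).
Qed.

Definition Good n (m : nat) (p : seq ({set 'I_n} * int)) :=
  Cset p = set0 \/ (2 ^ (n - #|Afix p|) <= 2 ^ m * #|Cset p|)%N.

Lemma Afix_sub n (p p' : seq ({set 'I_n} * int)) :
  Cset p' \subset Cset p -> Afix p \subset Afix p'.
Proof.
move/subsetP => s; apply/subsetP => i; rewrite !inE.
move/forall_inP => h; apply/forall_inP => b hb; apply/forall_inP => c hc.
by move/forall_inP: (h b (s b hb)) => /(_ c (s c hc)).
Qed.

Lemma Cset_cat1_sub n (p : seq ({set 'I_n} * int)) q :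
  Cset (p ++ [:: q]) \subset Cset p.
Proof. by rewrite Cset_cat1 subsetIl. Qed.

Lemma Good_ext n m (p : seq ({set 'I_n} * int)) q :
  Good m p -> Good m.+1 (p ++ [:: q]).
Proof.
have sub := Cset_cat1_sub p q.
case: (set_0Vmem (Cset (p ++ [:: q]))) => [e|[y hy]]; first by move=> _; left.
have ne : Cset (p ++ [:: q]) != set0 by apply/set0Pn; exists y.
case => [C0|h].
  by move/subsetP: sub => /(_ y hy); rewrite C0 inE.
right; have hv := halve ne.
have hA := subset_leq_card (Afix_sub sub).
apply: (@leq_trans (2 ^ (n - #|Afix p|))).
  by rewrite leq_exp2l //; lia.
apply: (leq_trans h); by rewrite expnS -mulnA mulnCA leq_mul2l hv orbT.
Qed.

Lemma Cset1E n (p : seq ({set 'I_n} * int)) i s b :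
  b \in Cset (p ++ [:: ([set i], s)]) -> b \in Cset p /\ toint b i = s.
Proof.
rewrite Cset_cat1 !inE => /andP [hb /eqP hq]; split => //.
by move: hq; rewrite /parity big_set1.
Qed.

Lemma step n m (p : seq ({set 'I_n} * int)) (i j : 'I_n) :
  Good m p -> i != j -> fixed_by p (fun x => x i * x j) ->
  ~ fixed_by p (fun x => x i) ->
  exists m', m = m'.+1 /\ forall s, Good m' (p ++ [:: ([set i], s)]).
Proof.
move=> hG ij /pairE hp ni.
have iA : i \notin Afix p by apply/negP => /AfixP.
have jA : j \notin Afix p.
  apply/negP => /AfixP /fixedE hj; apply: ni; apply/fixedE => b c hb hc.
  rewrite /toint; congr sgn; have := hp b c hb hc.
  by rewrite (sgn_inj (hj b c hb hc)); move/addIb.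
case: hG => [C0|h].
  have : i \in Afix p by apply/AfixP/fixedE => b c; rewrite C0 inE.
  by rewrite (negbTE iA).
have cA : (#|Afix p| < n)%N.
  by have := max_card (i |: Afix p); rewrite cardsU1 iA card_ord.
have up : (#|Cset p| <= 2 ^ (n - #|Afix p|).-1)%N.
  have -> : (n - #|Afix p|).-1 = #|~: (i |: Afix p)|.
    have := cardsC (i |: Afix p); rewrite cardsU1 iA card_ord /=.
    move: (#|Afix p|) (#|~: (i |: Afix p)|) cA => a b; lia.
  apply: card_bound => b c hb hc agree; apply/ffunP => k.
  have jB : j \in ~: (i |: Afix p) by rewrite in_setC in_setU1 negb_or eq_sym ij jA.
  case: (boolP (k \in Afix p)) => kA.
    by move/AfixP/fixedE: kA => /(_ b c hb hc) /sgn_inj.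
  case: (eqVneq k i) => [->|ki].
    by have := hp b c hb hc; rewrite (agree j jB); move/addIb.
  by apply: agree; rewrite in_setC in_setU1 negb_or ki kA.
case: m h => [|m'] h.
  have := leq_trans h (_ : 2 ^ 0 * #|Cset p| <= 2 ^ (n - #|Afix p|).-1)%N.
  rewrite mul1n => /(_ up); rewrite leq_exp2l //; lia.
exists m'; split => // s.
set p' := p ++ _.
case: (set_0Vmem (Cset p')) => [e|[y hy]]; first by left.
have ne : Cset p' != set0 by apply/set0Pn; exists y.
right; have hv := halve ne.
have sub := Cset_cat1_sub p ([set i], s).
have iA' : i \in Afix p'.
  apply/AfixP/fixedE => b c /Cset1E [_ ->] /Cset1E [_ ->] //.
have jA' : j \in Afix p'.
  apply/AfixP/fixedE => b c hb hc.
  move/AfixP/fixedE: iA' => /(_ b c hb hc) /sgn_inj bc.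
  case/Cset1E: hb => hb _; case/Cset1E: hc => hc _.
  by have := hp b c hb hc; rewrite bc /toint => /addbI ->.
have c2 : (#|Afix p| + 2 <= #|Afix p'|)%N.
  have -> : (#|Afix p| + 2 = #|i |: (j |: Afix p)|)%N.
    rewrite !cardsU1 in_setU1 negb_or ij iA jA /=.
    move: (#|Afix p|) => a; lia.
  apply: subset_leq_card; apply/subsetP => k; rewrite !in_setU1.
  case/or3P => [/eqP->|/eqP->|kA] //.
  by move/subsetP: (Afix_sub sub) => /(_ k kA).
have cn : (#|Afix p'| <= n)%N by have := max_card (Afix p'); rewrite card_ord.
have e1 : (2 ^ (n - #|Afix p'|) * 4 <= 2 ^ (n - #|Afix p|))%N.
  by rewrite (_ : 4 = 2 ^ 2)%N // -expnD leq_exp2l //; lia.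
move: e1 h hv; rewrite expnS.
move: (2 ^ (n - #|Afix p'|))%N (2 ^ (n - #|Afix p|))%N (2 ^ m')%N => X Y P.
move: (#|Cset p|) (#|Cset p'|) => c c'.
nia.
Qed.

Definition okp n (p : seq ({set 'I_n} * int)) :=
  forall i j : 'I_n, i != j -> fixed_by p (fun x => x i * x j) ->
    fixed_by p (fun x => x i) /\ fixed_by p (fun x => x j).

Lemma fixed_swap n (p : seq ({set 'I_n} * int)) (i j : 'I_n) :
  fixed_by p (fun x => x i * x j) -> fixed_by p (fun x => x j * x i).
Proof.
move=> h x y hx hy fx fy; rewrite mulrC [y j * _]mulrC; exact: h.
Qed.

Lemma complete n m : forall p : seq ({set 'I_n} * int), Good m p ->
  exists U : pdt n, (depth U <= m)%N /\
    forall q, q \in leaf_paths U -> okp (p ++ q).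
Proof.
elim: m => [|m IH] p hG.
all: case: (classic (exists i j : 'I_n, i != j /\ fixed_by p (fun x => x i * x j)
                       /\ ~ fixed_by p (fun x => x i))) => [[i [j [ij [hij ni]]]]|nb].
- by case: (step hG ij hij ni) => m' [].
- exists PLeaf; split => // q; rewrite inE => /eqP ->; rewrite cats0.
  move=> i j ij hij; split; apply: NNPP => nf; apply: nb.
    by exists i, j.
  by exists j, i; split; [rewrite eq_sym | split => //; apply: fixed_swap].
- case: (step hG ij hij ni) => m' [[<-] hs].
  case: (IH _ (hs (-1))) => U1 [d1 h1].
  case: (IH _ (hs 1)) => U2 [d2 h2].
  exists (PNode [set i] U1 U2); split; first by rewrite /= ltnS geq_max d1 d2.
  move=> q; rewrite /= mem_cat => /orP [] /mapP [q' hq' ->];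
    rewrite -cat1s catA; [exact: h1 | exact: h2].
- exists PLeaf; split => // q; rewrite inE => /eqP ->; rewrite cats0.
  move=> i j ij hij; split; apply: NNPP => nf; apply: nb.
    by exists i, j.
  by exists j, i; split; [rewrite eq_sym | split => //; apply: fixed_swap].
Qed.

Lemma gen n (T : pdt n) : forall (p : seq ({set 'I_n} * int)) m, Good m p ->
  exists T', refines T' T /\ (depth T' <= 2 * depth T + m)%N /\
    forall q, q \in leaf_paths T' -> okp (p ++ q).
Proof.
elim: T => [|Q tm IHm tp IHp] p m hG.
  case: (complete hG) => U [dU hU]; exists U; split; first by case: U {dU hU}.
  by split; [rewrite muln0 | exact: hU].
case: (IHm _ _ (Good_ext (Q, -1) hG)) => T1 [r1 [d1 h1]].
case: (IHp _ _ (Good_ext (Q, 1) hG)) => T2 [r2 [d2 h2]].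
exists (PNode Q T1 T2); split; first by [] || (simpl; split; [|split]).
split.
  move: d1 d2 => /=; move: (depth T1) (depth T2) (depth tm) (depth tp) => a b c d.
  lia.
move=> q; rewrite /= mem_cat => /orP [] /mapP [q' hq' ->];
  rewrite -cat1s catA; [exact: h1 | exact: h2].
Qed.

Theorem proposition2 (n : nat) (T : pdt n) (d : nat) :
  depth T = d ->
  exists T' : pdt n, refines T' T /\ correlation_free T' /\ (depth T' <= 2 * d)%N.
Proof.
move=> <-.
have G0 : Good 0 ([::] : seq ({set 'I_n} * int)).
  right; rewrite mul1n.
  have -> : Cset ([::] : seq ({set 'I_n} * int)) = setT by apply/setP => b; rewrite !inE.
  rewrite cardsT card_ffun card_bool card_ord leq_exp2l //; exact: leq_subr.
case: (gen T G0) => T' [r [dT h]]; exists T'; split => //; split.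
  move=> i j ij q hq; exact: (h q hq i j ij).
by rewrite addn0 in dT.
Qed.
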